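(* Let $H\le G$ be finite groups, $Y$ an irreducible unitary representation of $H$, $Y^{\uparrow}=\bigoplus_t t\otimes Y$ the induced unitary representation, $V$ a $G$-subrepresentation of $Y^{\uparrow}$, and $E$ the orthogonal projection onto $e\otimes Y$. Then for every unit vector $\psi\in V$, $$\langle\psi|E\psi\rangle\le\frac{\dim V}{\dim Y^{\uparrow}}.$$
   Context: $Y^{\uparrow}=\mathbb{C}G\otimes_{\mathbb{C}H}Y$ with $t$ ranging over left coset representatives of $H$, equipped with the inner product making the subspaces $t\otimes Y$ pairwise orthogonal, each with the inner product of $Y$; it is then a unitary representation of $G$. *)

(* Defs.v *)
From HB Require Import structures.
From mathcomp Require Import all_boot all_order all_algebra all_fingroup.
From mathcomp Require Import mxrepresentation.
Set Implicit Arguments. Unset Strict Implicit. Unset Printing Implicit Defensive.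
Import Order.TTheory GRing.Theory Num.Theory.
Local Open Scope ring_scope.
Local Open Scope group_scope.

(* Conventions: a (finite dim.) representation rho of a group G on C^n is a
   family of matrices with mx_repr G rho (rho 1 = 1, rho (x*y) = rho x *m rho y),
   read as a LEFT action on column vectors  v |-> rho g v.  We encode vectors
   as row vectors, so the action reads  v |-> v *m (rho g)^T. *)

Section Defs.
Variable C : numClosedFieldType.

Definition adjmx m n (A : 'M[C]_(m, n)) : 'M[C]_(n, m) := (map_mx Num.conj A)^T.

Definition hdot m n (u v : 'M[C]_(m, n)) : C :=
  (\sum_(i < m) \sum_(j < n) (Num.conj (u i j)) * v i j)%R.

Variable gT : finGroupType.

Definition unitary_rep (G : {set gT}) n (rho : gT -> 'M[C]_n) :=
  mx_repr G rho /\ {in G, forall g, (rho g *m adjmx (rho g) = 1%:M)%R}.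

Definition linvariant (G : {set gT}) n (rho : gT -> 'M[C]_n) m (U : 'M[C]_(m, n)) :=
  {in G, forall g, (U *m (rho g)^T <= U)%MS}.

Definition irreducible_rep (G : {set gT}) n (rho : gT -> 'M[C]_n) :=
  (0 < n)%N /\
  forall U : 'M[C]_n, linvariant G rho U -> (U == (0 : 'M[C]_n))%MS || row_full U.

Definition left_transversal (G H : {set gT}) k (t : 'I_k -> gT) :=
  (forall i, t i \in G) /\ (forall g, g \in G -> exists! i, g \in t i *: H).

(* Induced representation Y^up = (+)_i t_i (x) Y, a vector being encoded as a
   k x n matrix whose i-th row is the Y-component at t_i.  For g in G,
   g (t_i (x) y) = t_j (x) (h y) where g t_i = t_j h, i.e. h = t_j^-1 g t_i \in H. *)
Definition ind_act (H : {set gT}) k n (t : 'I_k -> gT) (rY : gT -> 'M[C]_n)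
    (g : gT) (M : 'M[C]_(k, n)) : 'M[C]_(k, n) :=
  (\matrix_(j, c)
     \sum_(i < k)
        (if ((t j)^-1 * g * t i)%g \in H
         then (row i M *m (rY ((t j)^-1 * g * t i)%g)^T) 0 c else 0))%R.

Definition ind_subrep (G H : {set gT}) k n (t : 'I_k -> gT) (rY : gT -> 'M[C]_n)
    m (U : 'M[C]_(m, k * n)) :=
  forall g, g \in G -> forall M : 'M[C]_(k, n),
    (mxvec M <= U)%MS -> (mxvec (ind_act H t rY g M) <= U)%MS.

Definition block_proj k n (i0 : 'I_k) (M : 'M[C]_(k, n)) : 'M[C]_(k, n) :=
  (\matrix_(i, c) (if i == i0 then M i c else 0))%R.

End Defs.

(* Main.v *)
Require Import Defs.
From HB Require Import structures.
From mathcomp Require Import all_boot all_order all_algebra all_fingroup.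
From mathcomp Require Import mxrepresentation mxred sesquilinear spectral.
Import Order.TTheory GRing.Theory Num.Theory.
Local Open Scope ring_scope.
Set Implicit Arguments. Unset Strict Implicit.

Section Idx.
Variables (R : Type) (k n : nat).

Lemma sum_ix (S : nmodType) (F : 'I_(k * n) -> S) :
  \sum_a F a = \sum_i \sum_j F (mxvec_index i j).
Proof.
rewrite (reindex _ (curry_mxvec_bij k n)) /= pair_bigA /=.
by apply: eq_bigr => -[i j].
Qed.

Definition pr (a : 'I_(k * n)) : 'I_k * 'I_n :=
  enum_val (cast_ord (esym (mxvec_cast k n)) a).

Lemma pr_ix i j : pr (mxvec_index i j) = (i, j).
Proof. by rewrite /pr /mxvec_index cast_ordK enum_rankK. Qed.

Lemma ix_inj i j i' j' : (mxvec_index i j == mxvec_index i' j' :> 'I_(k*n)) = ((i == i') && (j == j')).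
Proof.
apply/eqP/andP => [E|[/eqP-> /eqP->]] //.
by have := f_equal pr E; rewrite !pr_ix => -[-> ->].
Qed.
End Idx.
Section Main.
Variables (C : numClosedFieldType) (gT : finGroupType) (G H : {group gT}) (n k : nat)
  (rY : gT -> 'M[C]_n) (t : 'I_k -> gT).

Local Notation ix := (@mxvec_index k n).

Definition W (g : gT) i (d : 'I_n) j (c : 'I_n) : C :=
  if ((t j)^-1 * g * t i)%g \in H then rY ((t j)^-1 * g * t i)%g c d else 0.

Definition Rm (g : gT) : 'M[C]_(k * n) :=
  \matrix_(a, b) W g (pr a).1 (pr a).2 (pr b).1 (pr b).2.

Lemma Rm_ix g i d j c : Rm g (ix i d) (ix j c) = W g i d j c.
Proof. by rewrite mxE !pr_ix. Qed.

Lemma Rm_act g M : mxvec M *m Rm g = mxvec (ind_act H t rY g M).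
Proof.
apply/rowP => b; case/mxvec_indexP: b => j c.
rewrite mxvecE !mxE sum_ix; apply: eq_bigr => i _.
rewrite /W; case: ifP => Hc; last by apply: big1 => d _; rewrite Rm_ix /W Hc mulr0.
by rewrite !mxE; apply: eq_bigr => d _; rewrite mxvecE Rm_ix /W Hc !mxE.
Qed.
Hypotheses (HG : H \subset G) (Hrep : unitary_rep H rY) (Htr : left_transversal G H t).
Variable i0 : 'I_k.
Hypothesis Hi0 : (1 \in t i0 *: H)%g.

Lemma gcancel (a b c : gT) : ((a * b)^-1 * (a * c) = b^-1 * c)%g.
Proof. by rewrite invMg -mulgA mulKg. Qed.

Lemma tG i : t i \in G. Proof. by case: Htr. Qed.

Lemma t_uniq i j : ((t i)^-1 * t j \in H)%g -> i = j.
Proof.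
move=> h; case: Htr => _ /(_ _ (tG j)) [i1 [_ U]].
rewrite -(U i); last by rewrite mem_lcoset.
by rewrite -(U j) // mem_lcoset mulVg group1.
Qed.

Lemma ti0H : t i0 \in H.
Proof. by move: Hi0; rewrite mem_lcoset mulg1 groupV. Qed.

Lemma t_uniqH i : t i \in H -> i = i0.
Proof. by move=> h; apply/esym/t_uniq; rewrite groupM ?groupV ?ti0H. Qed.

Lemma j_ex g i : g \in G -> exists j, ((t j)^-1 * g * t i \in H)%g.
Proof.
move=> gG; case: Htr => _ /(_ (g * t i)%g); rewrite groupM ?tG // => /(_ isT) [j [h _]].
by exists j; rewrite -mulgA -mem_lcoset.
Qed.

Lemma j_uniq g i j j' : ((t j)^-1 * g * t i \in H)%g -> ((t j')^-1 * g * t i \in H)%g -> j = j'.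
Proof.
move=> h1 h2; apply: t_uniq.
have := groupM h1 (groupVr h2).
rewrite invMg invMg invgK !mulgA mulgK -(mulgA _ g) mulgV mulg1; apply.
Qed.

Lemma i_uniq g i i' j : ((t j)^-1 * g * t i \in H)%g -> ((t j)^-1 * g * t i' \in H)%g -> i = i'.
Proof.
move=> h1 h2; apply: t_uniq.
have := groupM (groupVr h1) h2.
by rewrite -!(mulgA _ g) !gcancel.
Qed.
Lemma adjmxE m p (A : 'M[C]_(m, p)) i j : adjmx A i j = (A j i)^*.
Proof. by rewrite !mxE. Qed.

Lemma adjmxM m p q (A : 'M[C]_(m, p)) (B : 'M[C]_(p, q)) :
  adjmx (A *m B) = adjmx B *m adjmx A.
Proof.
apply/matrixP => i j; rewrite !mxE rmorph_sum; apply: eq_bigr => l _.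
by rewrite !mxE rmorphM mulrC.
Qed.

Lemma adjmxK m p (A : 'M[C]_(m, p)) : adjmx (adjmx A) = A.
Proof. by apply/matrixP => i j; rewrite !mxE conjCK. Qed.

Lemma rY_unit h : h \in H -> adjmx (rY h) *m rY h = 1%:M.
Proof. by move=> hH; apply: mulmx1C; case: Hrep => _ ->. Qed.

Lemma Rm_unitary g : g \in G -> Rm g *m adjmx (Rm g) = 1%:M.
Proof.
move=> gG; apply/matrixP => a b.
case/mxvec_indexP: a => i d; case/mxvec_indexP: b => i' d'.
rewrite !mxE sum_ix ix_inj.
have [j0 hj0] := j_ex i gG.
rewrite (bigD1 j0) //= [X in _ + X]big1 ?addr0; last first.
  move=> j njj; apply: big1 => c _; rewrite adjmxE !Rm_ix /W.
  case: ifP => [h|]; last by rewrite mul0r.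
  by have := j_uniq h hj0 => /eqP; rewrite (negbTE njj).
have [<-|nii] := eqVneq i i'; last first.
  apply: big1 => c _; rewrite adjmxE !Rm_ix /W hj0.
  case: ifP => [h|]; last by rewrite ?rmorph0 mulr0.
  by have := i_uniq hj0 h => /eqP; rewrite (negbTE nii).
rewrite /= (eq_sym d).
have := rY_unit hj0 => /matrixP/(_ d' d); rewrite !mxE => <-.
by apply: eq_bigr => c _; rewrite !adjmxE !Rm_ix /W hj0 mulrC.
Qed.
Variables (m : nat) (U : 'M[C]_(m, k * n)).
Hypothesis Hinv : ind_subrep G H t rY U.

Definition Q := schmidt (row_base U).
Definition P := adjmx Q *m Q.

Lemma Q_unit : Q *m adjmx Q = 1%:M.
Proof.
have /unitarymxP := schmidt_unitarymx (row_base U) (rank_leq_col U).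
rewrite -/Q => E; rewrite -[RHS]E; congr (_ *m _); apply/matrixP => i j; rewrite !mxE //.
Qed.

Lemma Q_eq : (Q :=: U)%MS.
Proof. exact: eqmx_trans (eqmx_schmidt_free (row_base_free U)) (eq_row_base U). Qed.

Lemma P_fix (v : 'rV[C]_(k * n)) : (v <= U)%MS -> v *m P = v.
Proof.
rewrite -Q_eq => /submxP[w ->].
by rewrite /P mulmxA -(mulmxA w) Q_unit mulmx1.
Qed.

Lemma P_adj : adjmx P = P.
Proof. by rewrite /P adjmxM adjmxK. Qed.

Lemma P_idem : P *m P = P.
Proof. by rewrite /P mulmxA -(mulmxA _ Q) Q_unit mulmx1. Qed.

Lemma trP : \tr P = (\rank U)%:R.
Proof. by rewrite /P mxtrace_mulC Q_unit mxtrace1. Qed.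

Lemma U_stable g (v : 'rV[C]_(k * n)) : g \in G -> (v <= U)%MS -> (v *m Rm g <= U)%MS.
Proof.
move=> gG vU; rewrite -(vec_mxK v) Rm_act; apply: Hinv => //.
by rewrite vec_mxK.
Qed.

Lemma Q_stable g : g \in G -> (Q *m Rm g <= Q)%MS.
Proof.
move=> gG; apply/row_subP => i; rewrite row_mul Q_eq; apply: U_stable => //.
by rewrite -Q_eq row_sub.
Qed.

Lemma P_conj g : g \in G -> adjmx (Rm g) *m P *m Rm g = P.
Proof.
move=> gG; set A := Q *m Rm g *m pinvmx Q.
have AQ : A *m Q = Q *m Rm g by rewrite mulmxKpV // Q_stable.
have AA : A *m adjmx A = 1%:M.
  have : (A *m Q) *m adjmx (A *m Q) = 1%:M.
    by rewrite AQ adjmxM mulmxA -(mulmxA Q) Rm_unitary // mulmx1 Q_unit.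
  by rewrite adjmxM mulmxA -(mulmxA A) Q_unit mulmx1.
have AA' := mulmx1C AA.
rewrite /P mulmxA -adjmxM -mulmxA -AQ adjmxM -mulmxA (mulmxA (adjmx A)) AA' mul1mx.
by [].
Qed.

Lemma P_comm g : g \in G -> P *m Rm g = Rm g *m P.
Proof.
move=> gG; have RR := mulmx1C (Rm_unitary gG).
rewrite -{2}(P_conj gG) !mulmxA Rm_unitary // mul1mx //.
Qed.
Definition K : 'M[C]_n := \matrix_(c, d) P (ix i0 c) (ix i0 d).

Lemma gconj1 (h : gT) i : ((t i0)^-1 * (t i0 * h * (t i0)^-1) * t i = h * ((t i0)^-1 * t i))%g.
Proof. by rewrite !mulgA mulVg mul1g -mulgA. Qed.

Lemma gconj2 (h : gT) j : ((t j)^-1 * (t i0 * h * (t i0)^-1) * t i0 = (t j)^-1 * t i0 * h)%g.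
Proof. by rewrite !mulgA mulgKV. Qed.

Lemma WH1 h i d c : h \in H ->
  W (t i0 * h * (t i0)^-1)%g i d i0 c = if i == i0 then rY h c d else 0.
Proof.
move=> hH; rewrite /W gconj1; have [->|ni] := eqVneq i i0.
  by rewrite mulVg mulg1 hH.
case: ifP => // /(groupM (groupVr hH)); rewrite mulKg => /t_uniq E.
by move: ni; rewrite E eqxx.
Qed.

Lemma WH2 h j d c : h \in H ->
  W (t i0 * h * (t i0)^-1)%g i0 d j c = if j == i0 then rY h c d else 0.
Proof.
move=> hH; rewrite /W gconj2; have [->|nj] := eqVneq j i0.
  by rewrite mulVg mul1g hH.
case: ifP => //; rewrite groupMr // => /t_uniq E.
by move: nj; rewrite E eqxx.
Qed.

Lemma gH h : h \in H -> (t i0 * h * (t i0)^-1 \in G)%g.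
Proof. by move=> hH; apply: (subsetP HG); rewrite !groupM ?groupV ?ti0H. Qed.

Lemma K_comm h : h \in H -> K *m (rY h)^T = (rY h)^T *m K.
Proof.
move=> hH; have := P_comm (gH hH) => /matrixP E.
apply/matrixP => d c; have := E (ix i0 d) (ix i0 c); rewrite !mxE !sum_ix.
rewrite (bigD1 i0) //= [X in _ + X]big1 ?addr0; last first.
  by move=> i ni; apply: big1 => e _; rewrite Rm_ix WH1 // (negbTE ni) mulr0.
rewrite (bigD1 i0) //= [X in _ + X]big1 ?addr0; last first.
  by move=> i ni; apply: big1 => e _; rewrite Rm_ix WH2 // (negbTE ni) mul0r.
move=> E2; transitivity (\sum_j P (ix i0 d) (ix i0 j) * Rm (t i0 * h * (t i0)^-1)%g (ix i0 j) (ix i0 c)).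
  by apply: eq_bigr => e _; rewrite Rm_ix WH1 // eqxx !mxE.
by rewrite E2; apply: eq_bigr => e _; rewrite Rm_ix WH2 // eqxx !mxE.
Qed.
Hypothesis Hirr : irreducible_rep H rY.

Lemma K_scalar : exists lam, K = lam%:M.
Proof.
case: Hirr => n_gt0 Irr.
have [lam elam] := eigenvalue_closed K n_gt0.
exists lam; set E := eigenspace K lam.
have EK : E *m K = lam *: E by apply/eigenspaceP.
have Einv : linvariant H rY E.
  move=> h hH; apply/eigenspaceP.
  rewrite -mulmxA -K_comm // mulmxA.
  by rewrite EK -scalemxAl.
case/orP: (Irr E Einv) => [/andP[/submx0null E0 _]|].
  by move: elam; rewrite /eigenvalue -/E E0 eqxx.
rewrite -sub1mx => /eigenspaceP; rewrite mul1mx => ->.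
by rewrite scalemx1.
Qed.

Lemma rY1 : rY 1%g = 1%:M. Proof. by case: Hrep => -[]. Qed.

Lemma WT1 i i' d c : W (t i0 * (t i)^-1)%g i' d i0 c = if i' == i then (c == d)%:R else 0.
Proof.
rewrite /W !mulgA mulVg mul1g; have [->|ni] := eqVneq i' i.
  by rewrite mulVg group1 rY1 mxE.
case: ifP => // /t_uniq E; by move: ni; rewrite E eqxx.
Qed.

Lemma WT2 i j e c : W (t i0 * (t i)^-1)%g i c j e = if j == i0 then (e == c)%:R else 0.
Proof.
rewrite /W mulgA -(mulgA _ _ (t i)) mulVg mulg1; have [->|nj] := eqVneq j i0.
  by rewrite mulVg group1 rY1 mxE.
case: ifP => // /t_uniq E; by move: nj; rewrite E eqxx.
Qed.

Lemma P_diag i c : P (ix i c) (ix i c) = K c c.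
Proof.
have gG : (t i0 * (t i)^-1 \in G)%g by rewrite groupM ?groupV ?tG.
have := P_comm gG => /matrixP/(_ (ix i c) (ix i0 c)); rewrite !mxE !sum_ix.
rewrite (bigD1 i) //= [X in _ + X]big1 ?addr0; last first.
  by move=> i' ni; apply: big1 => e _; rewrite Rm_ix WT1 (negbTE ni) mulr0.
rewrite (bigD1 i0) //= [X in _ = _ + X]big1 ?addr0; last first.
  by move=> j nj; apply: big1 => e _; rewrite Rm_ix WT2 (negbTE nj) mul0r.
rewrite (bigD1 c) //= [X in _ + X]big1 ?addr0; last first.
  by move=> e ne; rewrite Rm_ix WT1 eqxx eq_sym (negbTE ne) mulr0.
rewrite (bigD1 c) //= [X in _ = _ + X]big1 ?addr0; last first.
  by move=> e ne; rewrite Rm_ix WT2 eqxx (negbTE ne) mul0r.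
by rewrite Rm_ix WT1 !eqxx mulr1 mul1r /P !mxE => ->.
Qed.
Lemma lam_val lam : K = lam%:M -> (\rank U)%:R = lam * (k * n)%:R.
Proof.
move=> HK; rewrite -trP /mxtrace sum_ix.
transitivity (\sum_(i < k) \sum_(c < n) lam).
  by apply: eq_bigr => i _; apply: eq_bigr => c _; rewrite P_diag HK mxE eqxx.
by rewrite sumr_const sumr_const !card_ord -mulrnA mulr_natr mulnC.
Qed.

Definition Dm : 'M[C]_(k * n) := \matrix_(a, b) ((a == b) && ((pr a).1 == i0))%:R.

Lemma Dm_mull p (M : 'M[C]_(k * n, p)) a b :
  (Dm *m M) a b = if (pr a).1 == i0 then M a b else 0.
Proof.
rewrite mxE (bigD1 a) //= big1 ?addr0; last first.
  by move=> x nx; rewrite mxE eq_sym (negbTE nx) mul0r.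
by rewrite mxE eqxx /=; case: ifP; rewrite ?mul1r ?mul0r.
Qed.

Lemma Dm_mulr p (M : 'M[C]_(p, k * n)) a b :
  (M *m Dm) a b = if (pr b).1 == i0 then M a b else 0.
Proof.
rewrite mxE (bigD1 b) //= big1 ?addr0; last first.
  by move=> x nx; rewrite mxE (negbTE nx) mulr0.
by rewrite mxE eqxx /=; case: ifP; rewrite ?mulr1 ?mulr0.
Qed.

Lemma Dm_adj : adjmx Dm = Dm.
Proof.
apply/matrixP => a b; rewrite !mxE eq_sym conjC_nat.
by have [->|] := eqVneq b a.
Qed.

Lemma Dm_idem : Dm *m Dm = Dm.
Proof.
apply/matrixP => a b; rewrite Dm_mull mxE.
by case: eqP => // _; rewrite andbF.
Qed.

Lemma DPD lam : K = lam%:M -> Dm *m P *m Dm = lam *: Dm.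
Proof.
move=> HK; apply/matrixP => a b; rewrite Dm_mulr Dm_mull !mxE.
case/mxvec_indexP: a => i c; case/mxvec_indexP: b => j d; rewrite !pr_ix /= ix_inj.
have [->|ni] := eqVneq i i0; last by rewrite andbF mulr0; case: ifP.
have [->|nj] := eqVneq j i0; last by rewrite /= mulr0.
have := HK => /matrixP/(_ c d); rewrite !mxE => ->.
by rewrite /= andbT; case: eqP; rewrite ?mulr1 ?mulr0.
Qed.
Definition nrm p (x : 'rV[C]_p) := (x *m adjmx x) 0 0.

Lemma nrm_ge0 p (x : 'rV[C]_p) : 0 <= nrm x.
Proof.
rewrite /nrm mxE; apply: sumr_ge0 => a _; rewrite adjmxE; exact: mul_conjC_ge0.
Qed.

Lemma hdot_nrm (psi : 'M[C]_(k, n)) : hdot psi psi = nrm (mxvec psi).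
Proof.
rewrite /hdot /nrm mxE sum_ix; apply: eq_bigr => i _; apply: eq_bigr => c _.
by rewrite adjmxE mxvecE mulrC.
Qed.

Lemma hdot_D (psi : 'M[C]_(k, n)) :
  hdot psi (block_proj i0 psi) = (mxvec psi *m Dm *m adjmx (mxvec psi)) 0 0.
Proof.
rewrite /hdot mxE sum_ix; apply: eq_bigr => i _; apply: eq_bigr => c _.
rewrite adjmxE Dm_mulr pr_ix mxvecE !mxE /=.
by case: ifP; rewrite ?mulr0 ?mul0r // mulrC.
Qed.

Lemma final_gen N (P' D : 'M[C]_N) (v : 'rV[C]_N) lam :
  P' *m P' = P' -> adjmx P' = P' -> adjmx D = D -> D *m P' *m D = lam *: D ->
  v *m P' = v -> 0 < lam -> nrm v = 1 -> (v *m D *m adjmx v) 0 0 <= lam.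
Proof.
move=> P_idem P_adj Dm_adj DPD vP lam_gt0 v1.
have Pv : P' *m adjmx v = adjmx v by rewrite -{1}P_adj -adjmxM vP.
set X := P' *m D *m P'.
have XX : X *m X = lam *: X.
  have -> : X *m X = P' *m (D *m P' *m D) *m P'.
    by rewrite /X !mulmxA -(mulmxA (P' *m D) P' P') P_idem.
  by rewrite DPD -scalemxAr -scalemxAl.
have Xadj : adjmx X = X by rewrite /X !adjmxM P_adj Dm_adj mulmxA.
have vX : (v *m X *m adjmx v) 0 0 = (v *m D *m adjmx v) 0 0.
  by rewrite /X !mulmxA vP -(mulmxA _ P') Pv.
clearbody X.
set Y := lam%:M - X.
have lamC : lam^* = lam by apply: conj_Creal; apply: gtr0_real.
have Yadj : adjmx Y = Y.
  apply/matrixP => a b; rewrite /Y !mxE rmorphB /= eq_sym.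
  rewrite rmorphMn -[in RHS]Xadj adjmxE; congr (_ *+ _ - _); exact: lamC.
have YY : Y *m Y = lam *: Y.
  rewrite /Y mulmxBl !mulmxBr XX !mul_scalar_mx mul_mx_scalar scalerBr.
  by rewrite subrr subr0.
have vY : (v *m Y *m adjmx v) 0 0 = lam - (v *m D *m adjmx v) 0 0.
  rewrite /Y mulmxBr mulmxBl mul_mx_scalar -scalemxAl -vX.
  rewrite [in LHS]mxE [X in _ + X = _]mxE [X in X + _ = _]mxE.
  by rewrite -/(nrm v) v1 mulr1.
have : 0 <= lam * (v *m Y *m adjmx v) 0 0.
  have : nrm (v *m Y) = lam * (v *m Y *m adjmx v) 0 0.
    rewrite /nrm adjmxM Yadj !mulmxA -(mulmxA v) YY -scalemxAr -scalemxAl mxE.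
    by [].
  move=> <-; exact: nrm_ge0.
by rewrite pmulr_rge0 // vY subr_ge0.
Qed.
Lemma main_sec (psi : 'M[C]_(k, n)) : (mxvec psi <= U)%MS -> hdot psi psi = 1 ->
  hdot psi (block_proj i0 psi) <= (\rank U)%:R / (k * n)%:R.
Proof.
move=> vU h1.
have [lam HK] := K_scalar.
have rv := lam_val HK.
have n_gt0 : (0 < n)%N by case: Hirr.
have k_gt0 : (0 < k)%N by case: (k) i0 => [[]|].
have kn0 : (k * n)%:R != 0 :> C by rewrite pnatr_eq0 -lt0n muln_gt0 k_gt0.
have lamE : lam = (\rank U)%:R / (k * n)%:R by rewrite rv mulfK.
have r_gt0 : (0 < \rank U)%N.
  rewrite lt0n mxrank_eq0; apply/negP => /eqP U0.
  move: vU; rewrite U0 => /submx0null v0.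
  by move: h1; rewrite hdot_nrm v0 /nrm mul0mx mxE => /eqP; rewrite eq_sym oner_eq0.
have lam_gt0 : 0 < lam by rewrite lamE divr_gt0 // ltr0n ?muln_gt0 ?k_gt0.
rewrite -lamE hdot_D; apply: final_gen => //.
- exact: P_idem.
- exact: P_adj.
- exact: Dm_adj.
- exact: DPD.
- exact: P_fix.
- by rewrite -hdot_nrm.
Qed.
End Main.

Theorem proposition16 (C : numClosedFieldType) (gT : finGroupType)
    (G H : {group gT}) (n k : nat) (rY : gT -> 'M[C]_n) (t : 'I_k -> gT)
    (i0 : 'I_k) (m : nat) (U : 'M[C]_(m, k * n)) (psi : 'M[C]_(k, n)) :
  H \subset G ->
  unitary_rep H rY ->
  irreducible_rep H rY ->
  left_transversal G H t ->
  (1 \in t i0 *: H)%g ->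
  ind_subrep G H t rY U ->
  (mxvec psi <= U)%MS ->
  hdot psi psi = 1 ->
  hdot psi (block_proj i0 psi) <= (\rank U)%:R / (k * n)%:R.
Proof.
move=> HG Hrep Hirr Htr Hi0 Hinv.
exact: (main_sec HG Hrep Htr Hi0 Hinv Hirr).
Qed.
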